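(* For every $\delta>0$ there exist $n\ge1$, a pool $\mathcal D=\{(p_i,t_i)\}_{i=1}^n$ with $p_i\in[0,1]$, $t_i>0$, and a budget $T>0$, such that the greedy forward selection strategy (defined in the context) outputs an ensemble $S$ with majority-voting accuracy $q(S)\le 1/2+\delta$, while there is an index set $\mathcal L\subseteq\{1,\dots,n\}$ with $\sum_{i\in\mathcal L}t_i\le T$ and $q(\mathcal L)\ge 1-\delta$. In other words, the difference between the optimal constrained ensemble accuracy and the accuracy produced by greedy forward selection can be arbitrarily close to $1/2$.
   Context: A pool consists of candidate members $i=1,\dots,n$, each with accuracy $p_i\in[0,1]$ and cost $t_i>0$; a budget $T>0$ is given. For a nonempty index set $\mathcal L$ with $|\mathcal L|=\ell$, the (majority voting) accuracy is $q(\mathcal L)=\sum_{k=\lfloor \ell/2\rfloor+1}^{\ell}\sum_{\mathcal I\subseteq\mathcal L,|\mathcal I|=k}\prod_{i\in\mathcal I}p_i\prod_{j\in\mathcal L\setminus\mathcal I}(1-p_j)$. An index set $\mathcal L$ is feasible if $\sum_{i\in\mathcal L}t_i\le T$. Greedy forward selection: start with $S$ consisting of a single member of maximal accuracy $p_i$; then repeatedly, among the members $j\notin S$ with $\sum_{i\in S}t_i+t_j\le T$, take one maximizing $q(S\cup\{j\})$; if this value is strictly larger than $q(S)$, add $j$ to $S$ and continue, otherwise (or if no such $j$ exists) stop and output $S$. *)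

(* Defs.v *)
From HB Require Import structures.
From mathcomp Require Import all_boot all_order all_algebra.
From mathcomp Require Import reals.
Set Implicit Arguments. Unset Strict Implicit. Unset Printing Implicit Defensive.
Import Order.TTheory GRing.Theory Num.Theory.
Local Open Scope ring_scope.

Section Ensemble.
Variables (R : realType) (n : nat) (p t : 'I_n -> R) (T : R).

Definition mv_acc (L : {set 'I_n}) : R :=
  let l := #|L| in
  \sum_((l./2).+1 <= k < l.+1)
    \sum_(I : {set 'I_n} | (I \subset L) && (#|I| == k))
      (\prod_(i in I) p i) * (\prod_(j in L :\: I) (1 - p j)).

Definition cost (L : {set 'I_n}) : R := \sum_(i in L) t i.

Definition candidate (S : {set 'I_n}) (j : 'I_n) : Prop :=
  j \notin S /\ cost S + t j <= T.

Definition greedy_step (S S' : {set 'I_n}) : Prop :=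
  exists j, candidate S j /\
    (forall j', candidate S j' -> mv_acc (j' |: S) <= mv_acc (j |: S)) /\
    mv_acc S < mv_acc (j |: S) /\ S' = j |: S.

Definition greedy_stop (S : {set 'I_n}) : Prop :=
  forall j, candidate S j -> mv_acc (j |: S) <= mv_acc S.

Inductive greedy_reach (S0 : {set 'I_n}) : {set 'I_n} -> Prop :=
| greedy_reach_refl : greedy_reach S0 S0
| greedy_reach_step S S' : greedy_reach S0 S -> greedy_step S S' -> greedy_reach S0 S'.

(* S is a possible output of greedy forward selection (any tie-breaking) *)
Definition greedy_output (S : {set 'I_n}) : Prop :=
  exists i0, (forall i, p i <= p i0) /\ greedy_reach [set i0] S /\ greedy_stop S.

End Ensemble.

(* Main.v *)
Require Import Defs.
From HB Require Import structures.
From mathcomp Require Import all_boot all_order all_algebra.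
From mathcomp Require Import reals.
From mathcomp Require Import ring lra zify.
Import Order.TTheory GRing.Theory Num.Theory.
Local Open Scope ring_scope.

Lemma mv_small (R : realType) n (p : 'I_n -> R) (L : {set 'I_n}) :
  (#|L|./2).+1 = #|L| -> mv_acc p L = \prod_(i in L) p i.
Proof.
rewrite /mv_acc => h; rewrite h big_nat1 (big_pred1 L).
  by rewrite setDv big_set0 mulr1.
move=> I /=; rewrite eqEcard; case sub: (I \subset L) => //=.
by rewrite eqn_leq (subset_leq_card sub).
Qed.

Lemma mv_const1 (R : realType) n (c : R) (i : 'I_n) :
  mv_acc (fun _ => c) [set i] = c.
Proof. by rewrite mv_small ?cards1 // big_set1. Qed.

Lemma mv_const2 (R : realType) n (c : R) (i j : 'I_n) : j != i ->
  mv_acc (fun _ => c) (j |: [set i]) = c * c.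
Proof.
move=> ji; have nj : j \notin [set i] by rewrite in_set1.
by rewrite mv_small ?cardsU1 ?nj ?cards1 // big_setU1 //= big_set1.
Qed.

Section Greedy.
Variables (R : realType) (n : nat) (c T : R).
Hypotheses (c0 : 0 <= c) (c1 : c <= 1).
Let p : 'I_n -> R := fun _ => c.
Let t : 'I_n -> R := fun _ => 1.

Lemma cc_le : c * c <= c.
Proof. by rewrite ler_piMl. Qed.

Lemma reach_single i0 S : greedy_reach p t T [set i0] S -> S = [set i0].
Proof.
elim=> // S1 S2 _ -> [j [[nj _] [_ [lt _]]]].
move: lt; rewrite mv_const1 mv_const2; last by move: nj; rewrite in_set1.
by rewrite ltNge cc_le.
Qed.

Lemma stop_single i0 : greedy_stop p t T [set i0].
Proof.
move=> j [nj _]; rewrite mv_const1 mv_const2 ?cc_le //.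
by move: nj; rewrite in_set1.
Qed.

Lemma greedy_out_c S : greedy_output p t T S -> mv_acc p S = c.
Proof. by case=> i0 [_ [/reach_single -> _]]; rewrite mv_const1. Qed.

Lemma greedy_out_ex (i0 : 'I_n) : greedy_output p t T [set i0].
Proof.
exists i0; split; first by move=> i; rewrite /p.
split; [exact: greedy_reach_refl | exact: stop_single].
Qed.
End Greedy.
Section Comb.
Variables (R : realType) (n : nat).

Lemma prod_split (J : {set 'I_n}) (c d : R) :
  \prod_i (if i \in J then c else d) = c ^+ #|J| * d ^+ #|~: J|.
Proof.
rewrite (bigID (fun i => i \in J)) /=.
rewrite (eq_bigr (fun=> c)) => [|i ->//].
rewrite [X in _ * X](eq_bigr (fun=> d)) => [|i Hi]; last by rewrite (negbTE Hi).
rewrite !prodr_const; congr (_ ^+ _ * _ ^+ _); apply: eq_card => i.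
by rewrite !inE.
Qed.

Lemma sum_distr (c d : R) :
  \sum_(J : {set 'I_n}) c ^+ #|J| * d ^+ #|~: J| = (c + d) ^+ n.
Proof.
have := @bigA_distr R 0 1 *%R +%R 'I_n (fun _ => c) (fun _ => d).
rewrite prodr_const card_ord => ->.
by apply: eq_big => // J; rewrite prod_split.
Qed.

Lemma part_sum (H : {set 'I_n} -> R) a b :
  \sum_(a <= j < b) \sum_(I : {set 'I_n} | #|I| == j) H I = \sum_(I : {set 'I_n} | (a <= #|I| < b)%N) H I.
Proof.
under eq_bigr do rewrite big_mkcond.
rewrite exchange_big /= [RHS]big_mkcond; apply: eq_bigr => I _.
rewrite -big_mkcond /= (eq_bigl (fun j => j == #|I|)) ?big_nat1_eq //.
Qed.
End Comb.

Lemma term_bound (R : realType) (c : R) (a b k : nat) :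
  1 / 2 <= c <= 1 -> (a <= k)%N -> (a + b = k.*2.+1)%N ->
  c ^+ a * (1 - c) ^+ b <= (c * (1 - c)) ^+ k.
Proof.
move=> /andP[c1 c2] ak ab.
set d := (k - a)%N.
have -> : b = (a + d * 2).+1 by rewrite /d; lia.
have -> : k = (a + d)%N by rewrite /d; lia.
rewrite exprS !exprD exprM exprMn.
have X0 : 0 <= c ^+ a * (1 - c) ^+ a by apply: mulr_ge0; apply: exprn_ge0; lra.
have Y0 : 0 <= ((1 - c) ^+ 2) ^+ d by apply: exprn_ge0; apply: exprn_ge0; lra.
have YZ : ((1 - c) ^+ 2) ^+ d <= (c * (1 - c)) ^+ d.
  apply: lerXn2r; rewrite ?nnegrE ?expr2; nra.
rewrite exprAC; move: X0 Y0 YZ.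
set X := c ^+ a * (1 - c) ^+ a; set Y := _ ^+ d; set Z := _ ^+ d.
move=> X0 Y0 YZ.
have -> : c ^+ a * ((1 - c) * ((1 - c) ^+ a * Y)) = (1 - c) * (X * Y) by rewrite /X; ring.
have h1 : 0 <= 1 - c by lra.
have h2 : X * Y <= X * Z by apply: ler_wpM2l.
have h3 : (1 - c) * (X * Y) <= X * Y by apply: ler_piMl; [apply: mulr_ge0|lra].
lra.
Qed.

Lemma bern (R : realType) (s : R) k : 0 <= s <= 1 ->
  (1 - s) ^+ k * (1 + k%:R * s) <= 1.
Proof.
move=> /andP[s0 s1]; elim: k => [|k IH]; first by rewrite expr0 mul0r addr0 mulr1.
have y0 : 0 <= (1 - s) ^+ k by apply: exprn_ge0; lra.
have h : 0 <= (1 - s) ^+ k * (s * s) * (k%:R + 1).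
  apply: mulr_ge0; [apply: mulr_ge0 => //; nra | by rewrite natr1 ler0n].
rewrite exprS -natr1; nra.
Qed.

Lemma mv_big (R : realType) (c : R) k : 1 / 2 <= c <= 1 ->
  1 - 2 * (4 * (c * (1 - c))) ^+ k <= mv_acc (fun _ : 'I_(k.*2.+1) => c) setT.
Proof.
move=> hc.
rewrite /mv_acc cardsT card_ord.
have -> : (k.*2.+1)./2 = k by lia.
set n := k.*2.+1.
set F := fun I : {set 'I_n} => c ^+ #|I| * (1 - c) ^+ #|~: I|.
under eq_bigr => j _.
  rewrite (eq_bigl (fun I : {set 'I_n} => #|I| == j)); last by move=> I; rewrite subsetT.
  rewrite (eq_bigr F); last by move=> I _; rewrite !prodr_const setTD.
  over.
rewrite part_sum.
set M := (c * (1 - c)) ^+ k.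
have tot : \sum_(I : {set 'I_n}) F I = 1.
  by rewrite sum_distr addrC subrK expr1n.
have cnt : \sum_(I : {set 'I_n}) (1 : R) = 2 ^+ n.
  by rewrite -(sum_distr R n 1 1); apply: eq_bigr => I _; rewrite !expr1n mulr1.
have low : \sum_(I : {set 'I_n} | ~~ (k.+1 <= #|I| < n.+1)%N) F I <= 2 ^+ n * M.
  rewrite -cnt mulr_suml big_mkcond /=; apply: ler_sum => I _.
  case: ifP => hI.
    rewrite mul1r; apply: term_bound => //.
      have : (#|I| <= #|'I_n|)%N by apply: max_card.
      rewrite card_ord; move: hI; rewrite /n; move: #|I| => m; rewrite -!muln2; lia.
    by have := cardsC I; rewrite card_ord.
  by rewrite mul1r /M; apply: exprn_ge0; move: hc => /andP[h1 h2]; nra.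
have E : 2 ^+ n * M = 2 * (4 * (c * (1 - c))) ^+ k.
  rewrite /n /M exprS -muln2 mulnC exprM exprMn.
  have -> : (4:R) = 2 * 2 by ring.
  by rewrite !exprMn !mulrA.
move: tot; rewrite (bigID (fun I : {set 'I_n} => (k.+1 <= #|I| < n.+1)%N)) /=.
move: low; rewrite E; lra.
Qed.

Theorem proposition1 (R : realType) (delta : R) : 0 < delta ->
  exists (n : nat) (p t : 'I_n -> R) (T : R),
    [/\ (0 < n)%N,
        (forall i, 0 <= p i <= 1),
        (forall i, 0 < t i)
      & 0 < T] /\
    (exists S, greedy_output p t T S) /\
    (forall S, greedy_output p t T S -> mv_acc p S <= 1 / 2 + delta) /\
    exists L : {set 'I_n},
      [/\ L != set0, cost t L <= T & 1 - delta <= mv_acc p L].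
Proof.
move=> d0.
have [e [e0 e1 e2]] : exists e : R, [/\ 0 < e, e <= 1 / 2 & e <= delta].
  by case: (lerP delta (1 / 2)) => h; [exists delta | exists (1 / 2)]; split; lra.
set c := 1 / 2 + e.
have c0 : 0 <= c by rewrite /c; lra.
have c1 : c <= 1 by rewrite /c; lra.
set s := 4 * e * e.
have s0 : 0 < s by rewrite /s; nra.
have s1 : s <= 1 by rewrite /s; nra.
have [k hk] : exists k : nat, 2 / (s * delta) < k%:R.
  exists (Num.bound (2 / (s * delta))); apply: archi_boundP.
  by apply: divr_ge0 => //; apply: mulr_ge0; lra.
have sd : 0 < s * delta by apply: mulr_gt0.
move: hk; rewrite ltr_pdivrMr // => hk.
exists k.*2.+1, (fun _ => c), (fun _ => 1), (k.*2.+1)%:R.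
split.
  split; [by [] | by move=> i; apply/andP; split | by move=> i; exact: ltr01 | exact: ltr0Sn].
split; first by exists [set ord0]; apply: greedy_out_ex.
split; first by move=> S /greedy_out_c -> //; rewrite /c; lra.
exists setT; split.
- by apply/set0Pn; exists ord0; rewrite inE.
- by rewrite /cost sumr_const cardsT card_ord.
- have hc : 1 / 2 <= c <= 1 by apply/andP; split; rewrite /c; lra.
  apply: (le_trans _ (mv_big R c k hc)).
  have -> : 4 * (c * (1 - c)) = 1 - s by rewrite /c /s; field.
  have := bern R s k; rewrite ltW //= s1 => /(_ isT) hb.
  have y0 : 0 <= (1 - s) ^+ k by apply: exprn_ge0; lra.
  move: y0 hk hb; set y := (1 - s) ^+ k; set K := k%:R => y0 hk hb.
  have h1 : 0 <= y * (K * (s * delta) - 2) by apply: mulr_ge0; lra.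
  have h2 : 0 <= delta * (1 - y * (1 + K * s)) by apply: mulr_ge0; lra.
  have h3 : 0 <= y * delta by apply: mulr_ge0; lra.
  nra.
Qed.
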